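(* Let $K\ge 4$ and let $X$ be $\mathbb{R}^2$ with a norm $\|\cdot\|_X$ whose closed unit ball $BX$ is a symmetric convex polygon with $2K$ sides, written as $BX=\bigcap_{k=1}^K\{x:|x\cdot b_k|\le 1\}$ for vectors $b_1,\dots,b_K\in\mathbb{R}^2$. Then there are constants $C,c>0$ and arbitrarily large integers $n$ for which there exist sets $A=A(n)\subset B(0,1/2)$ with $|A|=n$ such that $$|(A-A)\cdot b_k|\le C n^{1-1/K},\quad k=1,\dots,K$$ (in particular $|\Delta_X(A)|\le C' n^{1-1/K}$ for a constant $C'$ independent of $n$), and $$\|x-x'\|_X\ge c\, n^{-1/2}\quad\text{for all } x,x'\in A,\ x\ne x'.$$
   Context: $B(x,r)$ is the closed Euclidean ball of center $x$ and radius $r$; $|A|$ is the cardinality of a finite set; $A-A=\{a-a':a,a'\in A\}$, $A\cdot v=\{a\cdot v: a\in A\}$; $\Delta_X(A)=\{\|x-x'\|_X:x,x'\in A\}$. The constants are independent of $n$. *)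

(* Defs.v *)
From HB Require Import structures.
From mathcomp Require Import all_boot all_order all_algebra.
From mathcomp Require Import all_classical all_reals all_analysis.
Set Implicit Arguments. Unset Strict Implicit. Unset Printing Implicit Defensive.
Import Order.TTheory GRing.Theory Num.Theory.
Local Open Scope ring_scope.

Section Defs.
Variable R : realType.

Definition dot2 (x y : R * R) : R := x.1 * y.1 + x.2 * y.2.
Definition sub2 (x y : R * R) : R * R := (x.1 - y.1, x.2 - y.2).

Definition in_ball2 (x : R * R) (r : R) (y : R * R) : Prop :=
  (y.1 - x.1) ^+ 2 + (y.2 - x.2) ^+ 2 <= r ^+ 2.

Definition normX (K : nat) (b : 'I_K -> R * R) (x : R * R) : R :=
  \big[Num.max/0]_(k < K) `|dot2 x (b k)|.

(* \bigcap_k {x : |x . b_k| <= 1} is a symmetric convex polygon with exactly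
   2K sides: every constraint k is non-redundant, i.e. the lines x . b_k = +-1
   each carry a genuine edge (a point of it lies strictly inside all other
   strips). This forces the b_k to be nonzero and pairwise non-parallel, and
   for K >= 2 the intersection is bounded. *)
Definition polygon_2K_sides (K : nat) (b : 'I_K -> R * R) : Prop :=
  forall k : 'I_K, exists x : R * R,
    `|dot2 x (b k)| = 1 /\ forall j : 'I_K, j != k -> `|dot2 x (b j)| < 1.

Definition card_diff_dot (A : seq (R * R)) (v : R * R) : nat :=
  size (undup [seq dot2 (sub2 x y) v | x <- A, y <- A]).

Definition card_dist (K : nat) (b : 'I_K -> R * R) (A : seq (R * R)) : nat :=
  size (undup [seq normX b (sub2 x y) | x <- A, y <- A]).

End Defs.

(* Main.v *)
Require Import Defs.
From HB Require Import structures.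
From mathcomp Require Import all_boot all_order all_algebra.
From mathcomp Require Import all_classical all_reals all_analysis.
From mathcomp Require Import zify ring lra.
Import Order.TTheory GRing.Theory Num.Theory.
Local Open Scope ring_scope.
Set Implicit Arguments. Unset Strict Implicit. Unset Printing Implicit Defensive.

Section Basic.
Variable R : realType.

Definition Dm (u v : R * R) : R := u.1 * v.2 - u.2 * v.1.

Lemma normX_ge (K : nat) (b : 'I_K -> R * R) v k :
  `|dot2 v (b k)| <= normX b v.
Proof. rewrite /normX; exact: (le_bigmax 0 (fun k => `|dot2 v (b k)|) k). Qed.

Lemma normX_att (K : nat) (b : 'I_K.+1 -> R * R) v :
  exists k, normX b v = `|dot2 v (b k)|.
Proof.
rewrite /normX.
rewrite (bigmax_eq_arg 0 ord0 predT (fun k => `|dot2 v (b k)|)) //.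
by eexists.
Qed.

Lemma natdiff_ge1 (a c : nat) : a != c -> 1 <= `|a%:R - c%:R : R|.
Proof.
case: (ltngtP a c) => // H _.
- have : (a.+1)%:R <= c%:R :> R by rewrite ler_nat.
  rewrite -addn1 natrD => h.
  rewrite ler_normr; apply/orP; right; lra.
- have : (c.+1)%:R <= a%:R :> R by rewrite ler_nat.
  rewrite -addn1 natrD => h.
  rewrite ler_normr; apply/orP; left; lra.
Qed.

Lemma natdiff_le (m a c : nat) : (a < m)%N -> (c < m)%N -> `|a%:R - c%:R : R| <= m%:R.
Proof.
move=> ha hc.
have h1 : a%:R <= m%:R :> R by rewrite ler_nat ltnW.
have h2 : c%:R <= m%:R :> R by rewrite ler_nat ltnW.
have h3 : 0 <= a%:R :> R by [].
have h4 : 0 <= c%:R :> R by [].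
rewrite ler_norml; apply/andP; split; lra.
Qed.

Lemma sum_lb (K : nat) (f : 'I_K -> R) (S : pred 'I_K) (a e : R) :
  0 <= e -> a <= `|\sum_(j | S j) f j| -> (forall j, ~~ S j -> `|f j| <= e) ->
  a - K%:R * e <= `|\sum_j f j|.
Proof.
move=> e0 ha hf.
rewrite (bigID S) /=.
have hb : `|\sum_(j | ~~ S j) f j| <= K%:R * e.
  apply: (le_trans (ler_norm_sum _ _ _)).
  apply: (le_trans (y := \sum_(j | ~~ S j) e)); first by apply: ler_sum.
  rewrite big_mkcond /=.
  apply: (le_trans (y := \sum_(j < K) e)).
    by apply: ler_sum => j _; case: ifP.
  by rewrite sumr_const card_ord mulr_natl.
have := lerB_normD (\sum_(j | S j) f j) (\sum_(j | ~~ S j) f j).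
lra.
Qed.

Lemma fin_pos_lb (T : finType) (P : pred T) (h : T -> R) :
  (forall t, P t -> 0 < h t) -> exists2 d, 0 < d & forall t, P t -> d <= h t.
Proof.
move=> hp.
set S := \sum_(t | P t) (h t)^-1.
have S0 : 0 <= S by apply: sumr_ge0 => t /hp ht; rewrite invr_ge0 ltW.
exists (1 + S)^-1; first by rewrite invr_gt0; lra.
move=> t Pt.
have ht := hp t Pt.
have hle : (h t)^-1 <= 1 + S.
  rewrite /S (bigD1 t) //=.
  have : 0 <= \sum_(i | P i && (i != t)) (h i)^-1.
    by apply: sumr_ge0 => i /andP[/hp hi _]; rewrite invr_ge0 ltW.
  lra.
rewrite -(invrK (h t)) lef_pV2 // ?posrE ?invr_gt0 //; lra.
Qed.

Lemma fin_ub (T : finType) (h : T -> R) : exists d, forall t, h t <= d.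
Proof.
exists (\sum_t `|h t|) => t.
apply: (le_trans (ler_norm _)).
rewrite (bigD1 t) //=.
have : 0 <= \sum_(i | i != t) `|h i| by apply: sumr_ge0.
lra.
Qed.

Lemma Dm_nonpar (K : nat) (b : 'I_K -> R * R) (j k : 'I_K) :
  polygon_2K_sides b -> j != k -> Dm (b j) (b k) != 0.
Proof.
move=> hP jk; apply/eqP => D0.
have [x [hx1 hx2]] := hP j.
have [y [hy1 hy2]] := hP k.
have hxk : `|dot2 x (b k)| < 1 by apply: hx2; rewrite eq_sym.
have hyj := hy2 j jk.
have id : dot2 x (b j) * dot2 y (b k) - dot2 x (b k) * dot2 y (b j)
   = (x.1 * y.2 - x.2 * y.1) * Dm (b j) (b k).
  rewrite /dot2 /Dm; ring.
move: id; rewrite D0 mulr0 => /eqP; rewrite subr_eq0 => /eqP e.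
have : `|dot2 x (b j) * dot2 y (b k)| = 1 by rewrite normrM hx1 hy1 mulr1.
rewrite e normrM => h.
have a0 : 0 <= `|dot2 x (b k)| by [].
have a1 : 0 <= `|dot2 y (b j)| by [].
nra.
Qed.

End Basic.

Section Core.
Variable R : realType.
Variable K' : nat.
Local Notation K := K'.+1.
Variable b : 'I_K -> R * R.
Local Notation D j k := (Dm (b j) (b k)).
Variables (dl Dl io : R) (m Q L o : nat).
Hypothesis hdl : 0 < dl.
Hypothesis hDlb : forall j k : 'I_K, j != k -> dl <= `|D j k|.
Hypothesis hDub : forall j k : 'I_K, `|D j k| <= Dl.
Hypothesis hio0 : 0 < io.
Hypothesis hio1 : io <= 1.
Hypothesis hiot : K%:R * (m%:R * io ^+ 1 * Dl) <= dl / 2.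
Hypothesis ho : (o <= 1)%N.
Hypothesis hK : K = (2 * L.+1 + o)%N.
Hypothesis hQ : o = 1%N -> m = (Q * Q.+1)%N.

Definition i0 : 'I_K := inord 0.
Definition i1 : 'I_K := inord 1.
Definition i2 : 'I_K := inord 2.

Definition lam (j : 'I_K) : R :=
  if (o == 1%N) && (nat_of_ord j == 0%N) then Q%:R * D i2 i1 / D i0 i1
  else if (o == 1%N) && (nat_of_ord j == 1%N) then Q.+1%:R * D i2 i0 / D i1 i0
  else io ^+ ((nat_of_ord j - o) %/ 2).

Definition fterm (s s' : 'I_K -> nat) (k j : 'I_K) : R :=
  ((s j)%:R - (s' j)%:R) * lam j * D j k.

Lemma Dkk k : D k k = 0.
Proof. rewrite /Dm; ring. Qed.

Lemma lam_pow (j : 'I_K) : (o == 0%N) || (2 <= j)%N -> lam j = io ^+ ((nat_of_ord j - o) %/ 2).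
Proof.
move=> hj; rewrite /lam.
case: j hj => /= j' _ /orP[/eqP -> //|hj].
have -> : (j' == 0%N) = false by apply/eqP; lia.
have -> : (j' == 1%N) = false by apply/eqP; lia.
by rewrite !andbF.
Qed.

Lemma tail_bound (s s' : 'I_K -> nat) (k j : 'I_K) (e : nat) :
  (forall j, s j < m)%N -> (forall j, s' j < m)%N ->
  (o == 0%N) || (2 <= j)%N -> (e <= (nat_of_ord j - o) %/ 2)%N ->
  `|fterm s s' k j| <= m%:R * io ^+ e * Dl.
Proof.
move=> hs hs' h2 he.
rewrite /fterm lam_pow // !normrM.
have h1 : `|(s j)%:R - (s' j)%:R : R| <= m%:R := natdiff_le _ (hs j) (hs' j).
have h3 : `|io ^+ ((nat_of_ord j - o) %/ 2)| <= io ^+ e.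
  rewrite ger0_norm; last by rewrite exprn_ge0 // ltW.
  exact: (ler_wiXn2l (ltW hio0) hio1 he).
have h4 := hDub j k.
apply: (ler_pM _ _ (ler_pM _ _ h1 h3) h4) => //.
Qed.


Lemma nat3 (x0 x0' x1 x1' x2 x2' : nat) :
  (x0 < Q * Q.+1)%N -> (x0' < Q * Q.+1)%N -> (x1 < Q * Q.+1)%N ->
  (x1' < Q * Q.+1)%N -> (x2 < Q * Q.+1)%N -> (x2' < Q * Q.+1)%N ->
  (Q * x0 + x2 = Q * x0' + x2')%N -> (Q.+1 * x1 + x2 = Q.+1 * x1' + x2')%N ->
  [/\ x0 = x0', x1 = x1' & x2 = x2'].
Proof.
move=> *.
have [t ht] : exists t : int, (x1%:Z - x1'%:Z = Q%:Z * t)%R.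
  exists ((x0%:Z - x0'%:Z) - (x1%:Z - x1'%:Z))%R; lia.
have ht2 : (x2'%:Z - x2%:Z = (Q%:Z + 1) * Q%:Z * t)%R by nia.
have t0 : t = 0%R.
  have hQ0 : (0 <= (Q%:Z + 1) * Q%:Z)%R by lia.
  case: (ltrgtP t 0) => [h|h|//].
    have h1 : (t <= -1)%R by lia.
    have := ler_wpM2l hQ0 h1; lia.
  have h1 : (1 <= t)%R by lia.
  have := ler_wpM2l hQ0 h1; lia.
subst t; rewrite mulr0 in ht ht2.
have e1 : x1 = x1' by lia.
have e2 : x2 = x2' by lia.
have Qp : (0 < Q)%N by nia.
have e0 : (Q * x0 = Q * x0')%N by lia.
split => //; apply/eqP; rewrite -(eqn_pmul2l Qp); exact/eqP.
Qed.


Lemma natA (j : nat) : ~~ (j < 3)%N -> (2 <= j)%N.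
Proof. lia. Qed.
Lemma natB (j : nat) : ~~ (j < 3)%N -> (1 <= (j - 1) %/ 2)%N.
Proof. lia. Qed.
Lemma natC : o = 1%N -> (3 <= K)%N.
Proof. move: hK; clear; lia. Qed.
Lemma natD (j : nat) : (j < 3)%N -> j = 0%N \/ j = 1%N \/ j = 2%N.
Proof. lia. Qed.

Definition kk (j0 : nat) := if ((j0 - o) %% 2 == 0)%N then j0.+1 else j0.-1.

Lemma pf1 (j0 : nat) : (j0 < K)%N -> ~~ ((o == 1%N) && (j0 < 3)%N) -> (kk j0 < K)%N.
Proof.
rewrite /kk; move: hK ho; clear => hK ho h1 h2.
case: ifP => /eqP; lia.
Qed.
Lemma pf2 (j0 : nat) : kk j0 != j0.
Proof. rewrite /kk; case: ifP => /eqP; lia. Qed.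
Lemma pf3 (j0 : nat) : ~~ ((o == 1%N) && (j0 < 3)%N) -> (o == 0%N) || (2 <= j0)%N.
Proof. move: ho; clear => ho h; lia. Qed.
Lemma pf4 (j0 : nat) : (j0 < K)%N -> ((j0 - o) %/ 2 <= L)%N.
Proof. move: hK ho; clear; lia. Qed.
Lemma pf5 (j0 j : nat) : (o == 0%N) || (2 <= j0)%N -> (j0 < j)%N -> j != kk j0 -> (((j0 - o) %/ 2).+1 <= (j - o) %/ 2)%N.
Proof.
rewrite /kk; move: ho; clear => ho h0 h1 h2.
move: h2; case: ifP => /eqP h3 h2; lia.
Qed.
Lemma pf6 (j0 j : nat) : (o == 0%N) || (2 <= j0)%N -> (j0 < j)%N -> (o == 0%N) || (2 <= j)%N.
Proof. case/orP => [->//|h] hj; apply/orP; right; lia. Qed.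

Lemma split3 (s s' : 'I_K -> nat) k : (3 <= K)%N ->
  \sum_(j | (val j < 3)%N) fterm s s' k j =
  fterm s s' k i0 + fterm s s' k i1 + fterm s s' k i2.
Proof.
move=> K3.
rewrite (eq_bigl (fun j : 'I_K => predT j && (val j < 3)%N)) //.
rewrite (big_ord_narrow_cond (n1 := 3) (P := predT)) //.
rewrite !big_ord_recl big_ord0 addr0 addrA.
congr (fterm _ _ _ _ + fterm _ _ _ _ + fterm _ _ _ _); apply: val_inj => /=;
  rewrite /i0 /i1 /i2 inordK //; lia.
Qed.

Lemma core_sep (s s' : 'I_K -> nat) :
  (forall j, s j < m)%N -> (forall j, s' j < m)%N -> (exists j, s j != s' j) ->
  exists k, io ^+ L * dl / 2 <= `|\sum_j fterm s s' k j|.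
Proof.
move=> hs hs' [j1 hj1].
case: (arg_minnP (P := fun j => s j != s' j) (fun j : 'I_K => nat_of_ord j) hj1)
  => j0 hj0 hmin.
have below : forall j : 'I_K, (j < j0)%N -> s j = s' j.
  move=> j hj; case: (eqVneq (s j) (s' j)) => // /hmin; by rewrite leqNgt hj.
have hiL : io ^+ L <= 1 by rewrite exprn_ile1 // ltW.
have hioL0 : 0 <= io ^+ L by rewrite exprn_ge0 // ltW.
have Dl0 : 0 <= Dl by apply: le_trans (hDub j0 j0).
have etail : forall e, 0 <= m%:R * io ^+ e * Dl.
  by move=> e; rewrite !mulr_ge0 // exprn_ge0 // ltW.
case: (boolP ((o == 1%N) && (j0 < 3)%N)) => [/andP[/eqP o1 j03]|hnt].
-
  have mQ := hQ o1.
  have K3 : (3 <= K)%N by apply: natC.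
  have v0 : (i0 : nat) = 0%N by rewrite /i0 inordK.
  have v1 : (i1 : nat) = 1%N by rewrite /i1 inordK // (leq_trans _ K3).
  have v2 : (i2 : nat) = 2%N by rewrite /i2 inordK.
  have n01 : i0 != i1 by apply/eqP => e; move: v1; rewrite -e v0.
  have n02 : i0 != i2 by apply/eqP => e; move: v2; rewrite -e v0.
  have n12 : i1 != i2 by apply/eqP => e; move: v2; rewrite -e v1.
  have D01 : D i0 i1 != 0.
    apply/eqP => e; have := hDlb n01; rewrite e normr0 leNgt hdl //=.
  have D10 : D i1 i0 != 0.
    apply/eqP => e'; have : i1 != i0 by rewrite eq_sym.
    move/hDlb; rewrite e' normr0 leNgt hdl //=.
  have l0 : lam i0 = Q%:R * D i2 i1 / D i0 i1 by rewrite /lam o1 v0.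
  have l1 : lam i1 = Q.+1%:R * D i2 i0 / D i1 i0 by rewrite /lam o1 v1.
  have l2 : lam i2 = 1 by rewrite /lam o1 v2 /= subn1 /= expr0.
  have tailT : forall k j, ~~ (val j < 3)%N -> `|fterm s s' k j| <= m%:R * io ^+ 1 * Dl.
    move=> k [j' hj'] /= hj; apply: tail_bound => //=; rewrite o1 /=.
      by rewrite natA.
    exact: natB.
  set a1 := (Q * s i0 + s i2)%N; set a1' := (Q * s' i0 + s' i2)%N.
  set a2 := (Q.+1 * s i1 + s i2)%N; set a2' := (Q.+1 * s' i1 + s' i2)%N.
  have fin : forall k, dl <= `|\sum_(j | (val j < 3)%N) fterm s s' k j| ->
      exists k, io ^+ L * dl / 2 <= `|\sum_j fterm s s' k j|.
    move=> k hk; exists k.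
    have := sum_lb (etail 1%N) hk (tailT k).
    have hh : io ^+ L * dl <= dl by rewrite ler_piMl // ltW.
    move=> h; have hiot2 := hiot; set X := K%:R * (m%:R * io ^+ 1 * Dl) in h hiot2; set Y := io ^+ L * dl in hh *; lra.
  case: (eqVneq a1 a1') => [e1|ne1]; last first.
    apply: (fin i1).
    have -> : \sum_(j | (val j < 3)%N) fterm s s' i1 j = D i2 i1 * (a1%:R - a1'%:R).
      rewrite split3 // /fterm l0 l1 l2 Dkk /a1 /a1' !natrD !natrM; field; by rewrite D01 D10.
    rewrite normrM.
    have h1 : 1 <= `|a1%:R - a1'%:R : R| := natdiff_ge1 R ne1.
    have h2 : dl <= `|D i2 i1| by apply: hDlb; rewrite eq_sym.
    have := ler_pM (ltW hdl) ler01 h2 h1; rewrite mulr1 //.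
  case: (eqVneq a2 a2') => [e2|ne2]; last first.
    apply: (fin i0).
    have -> : \sum_(j | (val j < 3)%N) fterm s s' i0 j = D i2 i0 * (a2%:R - a2'%:R).
      rewrite split3 // /fterm l0 l1 l2 Dkk /a2 /a2' !natrD !natrM; field; by rewrite D01 D10.
    rewrite normrM.
    have h1 : 1 <= `|a2%:R - a2'%:R : R| := natdiff_ge1 R ne2.
    have h2 : dl <= `|D i2 i0| by apply: hDlb; rewrite eq_sym.
    have := ler_pM (ltW hdl) ler01 h2 h1; rewrite mulr1 //.
  exfalso.
  have a0 := hs i0; have a1_ := hs i1; have a2_ := hs i2.
  have b0 := hs' i0; have b1 := hs' i1; have b2 := hs' i2.
  rewrite mQ in a0 a1_ a2_ b0 b1 b2.
  have [f0 f1 f2] := nat3 a0 b0 a1_ b1 a2_ b2 e1 e2.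
  have jj : j0 = i0 \/ j0 = i1 \/ j0 = i2.
    move: v0 v1 v2; case: j0 j03 {hmin below hj0} => j hj /= j3 v0 v1 v2.
    have [e|[e|e]] := natD j3.
    + by left; apply: val_inj; rewrite /= v0.
    + by right; left; apply: val_inj; rewrite /= v1.
    + by right; right; apply: val_inj; rewrite /= v2.
  move: hj0; case: jj => [->|[->|->]].
  + by rewrite f0 eqxx.
  + by rewrite f1 eqxx.
  + by rewrite f2 eqxx.
-
  have hj0K := ltn_ord j0.
  set k : 'I_K := inord (kk j0).
  have vk : (k : nat) = kk j0 by rewrite /k inordK // pf1.
  have nk : j0 != k by apply/eqP => e; move: (pf2 j0); rewrite -vk -e eqxx.
  set lev := ((j0 - o) %/ 2)%N.
  have p3 := pf3 hnt.
  exists k.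
  have hlead : io ^+ lev * dl <= `|\sum_(j | j == j0) fterm s s' k j|.
    have X0 : 0 <= io ^+ lev by rewrite exprn_ge0 // ltW.
    rewrite big_pred1_eq /fterm lam_pow // !normrM (ger0_norm X0).
    have h1 : 1 <= `|(s j0)%:R - (s' j0)%:R : R| := natdiff_ge1 R hj0.
    have h2 : dl <= `|D j0 k| := hDlb nk.
    rewrite -[io ^+ lev * dl]mul1r -mulrA.
    apply: ler_pM => //; first by rewrite mulr_ge0 // ltW.
    exact: ler_wpM2l.
  have htail : forall j, ~~ (j == j0) -> `|fterm s s' k j| <= m%:R * io ^+ lev.+1 * Dl.
    move=> j hj; case: (ltngtP j j0) => hjj.
    - by rewrite /fterm (below _ hjj) subrr !mul0r normr0 etail.
    - case: (eqVneq j k) => [->|hjk].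
        by rewrite /fterm Dkk mulr0 normr0 etail.
      apply: tail_bound => //.
        exact: pf6 p3 hjj.
      apply: (pf5 p3 hjj).
      by move: hjk; apply: contra => /eqP e; apply/eqP; apply: val_inj; rewrite /= vk.
    - by exfalso; move: hj; rewrite (_ : j = j0) ?eqxx //; apply: val_inj.
  have := sum_lb (etail lev.+1) hlead htail.
  have e1 : K%:R * (m%:R * io ^+ lev.+1 * Dl) = io ^+ lev * (K%:R * (m%:R * io ^+ 1 * Dl)).
    by rewrite exprSr expr1; ring.
  have e2 : io ^+ lev * (K%:R * (m%:R * io ^+ 1 * Dl)) <= io ^+ lev * (dl / 2).
    by apply: ler_wpM2l => //; rewrite exprn_ge0 // ltW.
  have e3 : io ^+ L <= io ^+ lev by apply: ler_wiXn2l => //; [exact: ltW | exact: pf4].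
  have e4 : io ^+ L * dl <= io ^+ lev * dl by apply: ler_wpM2r => //; exact: ltW.
  rewrite e1 => h.
  set X := io ^+ lev * (K%:R * (m%:R * io ^+ 1 * Dl)) in h e2.
  set Y := io ^+ L * dl in e4 *.
  set Z := io ^+ lev * dl in e4 h.
  have : io ^+ lev * (dl / 2) = Z / 2 by rewrite /Z mulrA.
  lra.
Qed.

End Core.

Section Main.
Variable R : realType.

Definition ptf (K : nat) (b : 'I_K -> R * R) (sg : R) (lm : 'I_K -> R) (F : 'I_K -> nat) : R * R :=
  (sg * \sum_j (F j)%:R * lm j * - (b j).2, sg * \sum_j (F j)%:R * lm j * (b j).1).

Lemma dot_ptf K (b : 'I_K -> R * R) sg lm F F' k :
  dot2 (sub2 (ptf b sg lm F) (ptf b sg lm F')) (b k) =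
  sg * \sum_j ((F j)%:R - (F' j)%:R) * lm j * Dm (b j) (b k).
Proof.
rewrite /dot2 /sub2 /ptf /=.
rewrite !mulr_sumr -!sumrB !mulr_suml -big_split /=.
apply: eq_bigr => j _; rewrite /Dm; ring.
Qed.

Lemma count_vals (K' m : nat) (g : 'I_K'.+1 -> R) (k : 'I_K'.+1) (Ls : seq R) :
  g k = 0 ->
  (forall x, x \in Ls -> exists F F' : 'I_K'.+1 -> 'I_m,
      x = \sum_j ((F j : nat)%:R - (F' j : nat)%:R) * g j) ->
  (size (undup Ls) <= (m + m) ^ K')%N.
Proof.
move=> gk hL.
pose G (H : {ffun 'I_K' -> 'I_(m + m)}) : R :=
  \sum_(i < K') ((H i : nat)%:R - m%:R) * g (lift k i).
have -> : ((m + m) ^ K' = size (map G (enum {ffun 'I_K' -> 'I_(m + m)})))%N.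
  by rewrite size_map -cardE card_ffun !card_ord.
apply: uniq_leq_size; first exact: undup_uniq.
move=> x; rewrite mem_undup => /hL [F [F' ->]].
apply/mapP.
have hlt : forall (a c : 'I_m), (a + m - c < m + m)%N.
  by move=> [a ha] [c hc] /=; lia.
exists [ffun i => Ordinal (hlt (F (lift k i)) (F' (lift k i)))]; first by rewrite mem_enum.
rewrite /G (bigD1_ord k) //= gk mulr0 add0r.
apply: eq_bigr => i _; rewrite ffunE /=.
congr (_ * _).
have hc := ltn_ord (F' (lift k i)).
rewrite natrB; last by lia.
rewrite natrD; ring.
Qed.

Lemma count_vals2 (K' m : nat) (g : 'I_K'.+1 -> 'I_K'.+1 -> R) (h : R -> R) (Ls : seq R) :
  (forall k, g k k = 0) ->
  (forall x, x \in Ls -> exists k (F F' : 'I_K'.+1 -> 'I_m),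
      x = h (\sum_j ((F j : nat)%:R - (F' j : nat)%:R) * g k j)) ->
  (size (undup Ls) <= K'.+1 * (m + m) ^ K')%N.
Proof.
move=> gk hL.
pose G (p : 'I_K'.+1 * {ffun 'I_K' -> 'I_(m + m)}) : R :=
  h (\sum_(i < K') ((p.2 i : nat)%:R - m%:R) * g p.1 (lift p.1 i)).
have -> : (K'.+1 * (m + m) ^ K' =
   size (map G (enum {: 'I_K'.+1 * {ffun 'I_K' -> 'I_(m + m)}})))%N.
  by rewrite size_map -cardE card_prod card_ffun !card_ord.
apply: uniq_leq_size; first exact: undup_uniq.
move=> x; rewrite mem_undup => /hL [k [F [F' ->]]].
apply/mapP.
have hlt : forall (a c : 'I_m), (a + m - c < m + m)%N.
  by move=> [a ha] [c hc] /=; lia.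
exists (k, [ffun i => Ordinal (hlt (F (lift k i)) (F' (lift k i)))]); first by rewrite mem_enum.
rewrite /G (bigD1_ord k) //= gk mulr0 add0r.
congr h; apply: eq_bigr => i _; rewrite ffunE /=.
congr (_ * _).
have hc := ltn_ord (F' (lift k i)).
rewrite natrB; last by lia.
rewrite natrD; ring.
Qed.

Lemma powK (K' m : nat) :
  ((m ^ K'.+1)%:R : R) `^ (1 - K'.+1%:R^-1) = m%:R ^+ K'.
Proof.
rewrite natrX -powR_mulrn // -powRrM.
have -> : K'.+1%:R * (1 - K'.+1%:R^-1) = K'%:R :> R.
  by rewrite mulrBr mulr1 mulfV ?pnatr_eq0 // -addn1 natrD addrK.
by rewrite powR_mulrn.
Qed.


Lemma div_bound (x y dl Dl : R) : 0 < dl -> `|x| <= Dl -> dl <= `|y| -> `|x / y| <= Dl / dl.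
Proof.
move=> hdl hx hy.
have y0 : 0 < `|y| by apply: lt_le_trans hy.
rewrite normrM normfV; apply: ler_pM => //.
by rewrite lef_pV2 ?posrE.
Qed.

Lemma lam_bound (K' : nat) (b : 'I_K'.+1 -> R * R) dl Dl io Q o (j : 'I_K'.+1) :
  (1 <= K')%N -> 0 < dl -> (forall j k : 'I_K'.+1, j != k -> dl <= `|Dm (b j) (b k)|) ->
  (forall j k : 'I_K'.+1, `|Dm (b j) (b k)| <= Dl) -> 0 < io -> io <= 1 -> dl <= Dl ->
  `|lam b io Q o j| <= (if o == 1%N then Q.+1%:R else 1) * (Dl / dl).
Proof.
move=> K1 hdl hlb hub hio0 hio1 hdD.
have r1 : 1 <= Dl / dl by rewrite ler_pdivlMr // mul1r.
have v0 : (i0 K' : nat) = 0%N by rewrite /i0 inordK.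
have v1 : (i1 K' : nat) = 1%N by rewrite /i1 inordK.
have n01 : i0 K' != i1 K' by apply/eqP => e; move: v1; rewrite -e v0.
have n10 : i1 K' != i0 K' by rewrite eq_sym.
have QQ : Q%:R <= Q.+1%:R :> R by rewrite ler_nat.
rewrite /lam; case: ifP => [/andP[/eqP o1 _]|_].
  rewrite o1 eqxx -mulrA normrM normr_nat.
  by apply: ler_pM => //; apply: div_bound => //; apply: hlb.
case: ifP => [/andP[/eqP o1 _]|_].
  rewrite o1 eqxx -mulrA normrM normr_nat.
  by apply: ler_pM => //; apply: div_bound => //; apply: hlb.
have h1 : `|io ^+ ((j - o) %/ 2)| <= 1.
  rewrite ger0_norm; [exact: exprn_ile1 (ltW hio0) hio1 | exact: exprn_ge0 (ltW hio0)].
apply: (le_trans h1); case: ifP => _; last by rewrite mul1r.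
have : 1 <= Q.+1%:R :> R by rewrite ler1n.
move=> h; set q := Q.+1%:R in h *; set z := Dl / dl in r1 *; nra.
Qed.

Lemma natK (K' : nat) : (4 <= K'.+1)%N ->
  [/\ (K'.+1 %% 2 <= 1)%N,
      K'.+1 = (2 * ((K'.+1 - K'.+1 %% 2) %/ 2 - 1).+1 + K'.+1 %% 2)%N & (1 <= K')%N].
Proof. move=> h; split; lia. Qed.

End Main.

Unset Implicit Arguments.

Theorem lemma1p1 (R : realType) (K : nat) (b : 'I_K -> R * R) :
  (4 <= K)%N ->
  polygon_2K_sides b ->
  exists C c C' : R, 0 < C /\ 0 < c /\ 0 < C' /\
    forall N : nat, exists n : nat, (N <= n)%N /\
      exists A : seq (R * R),
        uniq A /\ size A = n /\
        (forall x, x \in A -> in_ball2 (0, 0) (2^-1) x) /\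
        (forall k : 'I_K,
           (card_diff_dot A (b k))%:R <= C * (n%:R `^ (1 - K%:R^-1))) /\
        (card_dist b A)%:R <= C' * (n%:R `^ (1 - K%:R^-1)) /\
        (forall x x', x \in A -> x' \in A -> x != x' ->
           normX b (sub2 x x') >= c * (n%:R `^ (- 2^-1))).
Proof.
case: K b => [|K'] b // hK4 hP.
have [ho hK K1] := natK hK4.
set o := (K'.+1 %% 2)%N in ho hK.
set L := ((K'.+1 - o) %/ 2 - 1)%N in hK.
have hpos : forall p : 'I_K'.+1 * 'I_K'.+1, p.1 != p.2 -> 0 < `|Dm (b p.1) (b p.2)|.
  by move=> p hp; rewrite normr_gt0; apply: Dm_nonpar.
have [dl hdl hdlb] := fin_pos_lb hpos.
have hDlb : forall j k : 'I_K'.+1, j != k -> dl <= `|Dm (b j) (b k)|.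
  by move=> j k hjk; apply: (hdlb (j, k)).
have [Dl hDl0] := fin_ub (fun p : 'I_K'.+1 * 'I_K'.+1 =>
   `|Dm (b p.1) (b p.2)| + `|(b p.1).1| + `|(b p.1).2|).
have hDub : forall j k : 'I_K'.+1, `|Dm (b j) (b k)| <= Dl.
  move=> j k; have := hDl0 (j, k) => /=.
  have := normr_ge0 (b j).1; have := normr_ge0 (b j).2; lra.
have hb1 : forall j : 'I_K'.+1, `|(b j).1| <= Dl.
  move=> j; have := hDl0 (j, j) => /=.
  have := normr_ge0 (b j).2; have := normr_ge0 (Dm (b j) (b j)); lra.
have hb2 : forall j : 'I_K'.+1, `|(b j).2| <= Dl.
  move=> j; have := hDl0 (j, j) => /=.
  have := normr_ge0 (b j).1; have := normr_ge0 (Dm (b j) (b j)); lra.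
have n01 : (i0 K' : 'I_K'.+1) != i1 K'.
  apply/eqP => e; have := congr1 (@nat_of_ord _) e; rewrite /i0 /i1 !inordK //.
have dlDl : dl <= Dl := le_trans (hDlb _ _ n01) (hDub _ _).
have Dlp : 0 < Dl := lt_le_trans hdl dlDl.
pose Kr : R := K'.+1%:R.
have Kr0 : 0 < Kr by rewrite /Kr ltr0n.
pose C1 : R := 2 * Kr * Dl / dl + 1.
have C1ge1 : 1 <= C1.
  have : 0 <= 2 * Kr * Dl / dl by rewrite !mulr_ge0 ?invr_ge0 // ltW.
  rewrite /C1; lra.
have C10 : 0 < C1 := lt_le_trans ltr01 C1ge1.
pose c0 : R := dl ^+ 2 / (6 * Kr * Dl ^+ 2 * C1 ^+ L).
have c00 : 0 < c0.
  by rewrite /c0 divr_gt0 ?exprn_gt0 // !mulr_gt0 ?exprn_gt0.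
exists (2 ^ K')%:R, (c0 / 2), (K'.+1 * 2 ^ K')%:R.
split; first by rewrite ltr0n expn_gt0.
split; first by rewrite divr_gt0.
split; first by rewrite ltr0n muln_gt0 expn_gt0.
move=> N.
pose Q := N.+1.
pose m := if o == 1%N then (Q * Q.+1)%N else Q.
have hm : (0 < m)%N by rewrite /m; case: ifP.
have Qm : (Q <= m)%N by rewrite /m; case: ifP => // _; rewrite leq_pmulr.
have hQ : o = 1%N -> m = (Q * Q.+1)%N by rewrite /m => ->.
pose T : R := if o == 1%N then Q.+1%:R else 1.
have T0 : 0 < T by rewrite /T; case: ifP.
pose mr : R := m%:R.
have mr0 : 0 < mr by rewrite /mr ltr0n.
pose io : R := (C1 * mr)^-1.
have io0 : 0 < io by rewrite /io invr_gt0 mulr_gt0.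
have io1 : io <= 1.
  rewrite /io invf_le1 ?mulr_gt0 //.
  have : 1 <= mr by rewrite /mr ler1n.
  move=> h; set u := C1 in C1ge1 *; set v := mr in h *; nra.
have iot : K'.+1%:R * (m%:R * io ^+ 1 * Dl) <= dl / 2.
  have -> : K'.+1%:R * (m%:R * io ^+ 1 * Dl) = Kr * Dl / C1.
    rewrite /Kr /io /mr expr1; field.
    by apply/andP; split; rewrite gt_eqF.
  rewrite ler_pdivrMr // /C1.
  have -> : dl / 2 * (2 * Kr * Dl / dl + 1) = Kr * Dl + dl / 2 by field; rewrite gt_eqF.
  lra.
pose sg : R := dl / (3 * Kr * mr * T * Dl ^+ 2).
have sg0 : 0 < sg by rewrite /sg divr_gt0 // !mulr_gt0 // exprn_gt0.
pose lm := lam b io Q o.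
pose pt (F : {ffun 'I_K'.+1 -> 'I_m}) := ptf b sg lm (fun j => F j).
pose A := map pt (enum {: {ffun 'I_K'.+1 -> 'I_m}}).
have sep : forall F F' : {ffun 'I_K'.+1 -> 'I_m}, F != F' ->
    exists k, io ^+ L * dl / 2 <= `|\sum_j fterm b io Q o (fun j => F j) (fun j => F' j) k j|.
  move=> F F' hFF; apply: (core_sep hdl hDlb hDub io0 io1 iot ho hK hQ) => //.
  case: (pickP (fun j => (F j : nat) != F' j)) => [j hj|h]; first by exists j.
  exfalso; move/eqP: hFF; apply; apply/ffunP => j; apply: val_inj.
  by move/negbFE/eqP: (h j).
have dotE : forall F F' k, dot2 (sub2 (pt F) (pt F')) (b k) =
    sg * \sum_j fterm b io Q o (fun j => F j) (fun j => F' j) k j.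
  by move=> F F' k; rewrite /pt dot_ptf.
have io0' : 0 < io ^+ L * dl / 2 by rewrite divr_gt0 // mulr_gt0 // exprn_gt0.
have inj : injective pt.
  move=> F F' e; apply/eqP; apply: contraT => hne.
  have [k hk] := sep F F' hne.
  have : dot2 (sub2 (pt F) (pt F')) (b k) = 0 by rewrite e /dot2 /sub2 !subrr !mul0r addr0.
  rewrite dotE => /eqP; rewrite mulf_eq0 gt_eqF //= => /eqP z.
  by move: hk; rewrite z normr0 leNgt io0'.
have Dkk0 : forall k : 'I_K'.+1, Dm (b k) (b k) = 0 by move=> k; rewrite /Dm mulrC subrr.
have powE := powK R K' m.
have lmb : forall j, `|lm j| <= T * (Dl / dl).
  by move=> j; apply: lam_bound.
have cb : forall (F : {ffun 'I_K'.+1 -> 'I_m}) (w : 'I_K'.+1 -> R), (forall j, `|w j| <= Dl) ->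
    `|sg * \sum_j (F j : nat)%:R * lm j * w j| <= 3^-1.
  move=> F w hw; rewrite normrM (gtr0_norm sg0).
  have h : `|\sum_j (F j : nat)%:R * lm j * w j| <= Kr * (mr * (T * (Dl / dl)) * Dl).
    apply: (le_trans (y := \sum_(j < K'.+1) (mr * (T * (Dl / dl)) * Dl))).
      apply: le_trans (ler_norm_sum _ _ _) _.
      apply: ler_sum => j _; rewrite !normrM normr_nat.
      have f1 : (F j : nat)%:R <= mr by rewrite /mr ler_nat ltnW.
      apply: ler_pM; [by rewrite mulr_ge0 | by [] | | exact: hw].
      exact: ler_pM (ler0n _ _) (normr_ge0 _) f1 (lmb j).
    by rewrite sumr_const card_ord -mulr_natl.
  have -> : 3^-1 = sg * (Kr * (mr * (T * (Dl / dl)) * Dl)).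
    rewrite /sg; field.
    by rewrite !gt_eqF.
  by apply: ler_wpM2l => //; exact: ltW.
exists (m ^ K'.+1)%N; split.
  apply: (leq_trans (n := m)); first by apply: leq_trans Qm; exact: leqnSn.
  by rewrite expnS leq_pmulr // expn_gt0 hm.
exists A; split; first by rewrite map_inj_uniq ?enum_uniq.
split; first by rewrite size_map -cardE card_ffun !card_ord.
split.
  move=> x /mapP [F _ ->]; rewrite /in_ball2 /pt /ptf /= !subr0.
  have hb2' : forall j, `|- (b j).2| <= Dl by move=> j; rewrite normrN.
  have h1 := cb F (fun j => - (b j).2) hb2'.
  have h2 := cb F (fun j => (b j).1) hb1.
  move: h1 h2; rewrite !ler_norml.
  set a := sg * _; set c := sg * _ => /andP[ha1 ha2] /andP[hc1 hc2].
  have -> : (2^-1 : R) ^+ 2 = 4^-1 by field.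
  nra.
split.
  move=> k; rewrite powE.
  have hc : (card_diff_dot A (b k) <= (m + m) ^ K')%N.
    rewrite /card_diff_dot; apply: (count_vals (g := fun j => sg * lm j * Dm (b j) (b k)) (k := k)).
      by rewrite Dkk0 mulr0.
    move=> x /allpairsP [[x1 x2] [/= /mapP [F _ ->] /mapP [F' _ ->] ->]].
    exists (fun j => F j), (fun j => F' j).
    rewrite dotE /fterm mulr_sumr; apply: eq_bigr => j _; rewrite /lm; ring.
  rewrite -(ler_nat R) in hc; apply: le_trans hc _.
  by rewrite -natrX -natrM ler_nat addnn -mul2n expnMn.
split.
  rewrite powE.
  have hc : (card_dist b A <= K'.+1 * (m + m) ^ K')%N.
    rewrite /card_dist.
    apply: (count_vals2 (g := fun k j => sg * lm j * Dm (b j) (b k)) (h := fun x => `|x|)).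
      by move=> k; rewrite Dkk0 mulr0.
    move=> x /allpairsP [[x1 x2] [/= /mapP [F _ ->] /mapP [F' _ ->] ->]].
    have [k ->] := normX_att b (sub2 (pt F) (pt F')).
    exists k, (fun j => F j), (fun j => F' j).
    rewrite dotE /fterm mulr_sumr; congr (`|_|); apply: eq_bigr => j _; rewrite /lm; ring.
  rewrite -(ler_nat R) in hc; apply: le_trans hc _.
  by rewrite -natrX -natrM ler_nat addnn -mul2n expnMn mulnA.
move=> x x' /mapP [F _ ->] /mapP [F' _ ->] hne.
have hFF : F != F' by apply: contra hne => /eqP ->.
have [k hk] := sep F F' hFF.
apply: le_trans (normX_ge b _ k); rewrite dotE normrM (gtr0_norm sg0).
apply: le_trans (ler_wpM2l (ltW sg0) hk).
set S := sg * (io ^+ L * dl / 2).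
have S0 : 0 <= S by rewrite /S mulr_ge0 // ltW.
have eS : S = c0 / (T * mr ^+ L.+1).
  rewrite /S /sg /io /c0 exprVn exprMn [mr ^+ L.+1]exprS.
  set P := mr ^+ L; set CL := C1 ^+ L.
  have P0 : 0 < P by rewrite exprn_gt0.
  have CL0 : 0 < CL by rewrite exprn_gt0.
  field.
  by rewrite !gt_eqF // ?exprn_gt0.
have eK : mr ^+ K'.+1 = (mr ^+ L.+1) ^+ 2 * mr ^+ o.
  by rewrite [in LHS]hK exprD mulnC exprM.
have hT : 2^-1 <= mr ^+ o / T ^+ 2.
  move: (ho); rewrite leq_eqVlt ltnS leqn0 => /orP[/eqP o1|/eqP o0].
  - rewrite /mr /T /m o1 /= expr1 natrM.
    have eq1 : Q.+1%:R = Q%:R + 1 :> R by rewrite -addn1 natrD.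
    rewrite eq1.
    have q1 : 1 <= Q%:R :> R by rewrite ler1n.
    have qp : 0 < (Q%:R + 1 : R) by lra.
    rewrite ler_pdivlMr ?exprn_gt0 //.
    set q := Q%:R in q1 *; nra.
  - rewrite /T o0 /= expr0 expr1n divr1.
    by rewrite invf_le1 ?ltr0n // ler1n.
have key : (c0 / 2) ^+ 2 <= S ^+ 2 * mr ^+ K'.+1.
  rewrite eS eK.
  have -> : (c0 / (T * mr ^+ L.+1)) ^+ 2 * ((mr ^+ L.+1) ^+ 2 * mr ^+ o) =
      c0 ^+ 2 * (mr ^+ o / T ^+ 2).
    field; by rewrite !gt_eqF // ?exprn_gt0.
  have -> : (c0 / 2) ^+ 2 = c0 ^+ 2 / 4 by field.
  have X0 : 0 < c0 ^+ 2 by rewrite exprn_gt0.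
  set X := c0 ^+ 2 in X0 *; set Y := mr ^+ o / T ^+ 2 in hT *; nra.
rewrite natrX -/mr.
set y := (mr ^+ K'.+1) `^ (- 2^-1).
have y0 : 0 <= y by apply: powR_ge0.
have mK0 : 0 < mr ^+ K'.+1 by rewrite exprn_gt0.
have y2 : y ^+ 2 = (mr ^+ K'.+1)^-1.
  rewrite /y -powR_mulrn ?powR_ge0 // -powRrM.
  have -> : - 2^-1 * 2%:R = -1 :> R by field.
  by rewrite powR_inv1 // ltW.
have c2 : 0 <= c0 / 2 by rewrite divr_ge0 // ltW.
have cy : 0 <= c0 / 2 * y := mulr_ge0 c2 y0.
rewrite -ler_sqr ?nnegrE //.
by rewrite exprMn y2 ler_pdivrMr.
Qed.
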